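(* Let $d\in\mathbb{N}$. If a linear functional $L:\mathbb{R}[\underline x]_{2d}\to\mathbb{R}$ satisfies $L(p^2)>0$ for all $p\in\mathbb{R}[\underline x]_d\setminus\{0\}$, then $L$ extends to a linear functional $\widetilde L:\mathbb{R}[\underline x]\to\mathbb{R}$ satisfying $\widetilde L(p^2)>0$ for all $p\in\mathbb{R}[\underline x]\setminus\{0\}$.
   Context: $\mathbb{R}[\underline x]=\mathbb{R}[x_1,\dots,x_n]$, and $\mathbb{R}[\underline x]_k$ denotes the subspace of polynomials of degree at most $k$. *)

(* Defs.v *)
From HB Require Import structures.
From mathcomp Require Import all_boot all_order all_algebra.
From mathcomp Require Import reals.
From mathcomp Require Import mpoly.
Set Implicit Arguments. Unset Strict Implicit. Unset Printing Implicit Defensive.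
Import Order.TTheory GRing.Theory Num.Theory.
Local Open Scope ring_scope.

(* R[x_1..x_n]_k : polynomials of total degree at most k.
   msize p = 1 + total degree of p, and msize 0 = 0. *)
Definition deg_le (R : ringType) (n k : nat) (p : {mpoly R[n]}) : bool :=
  (msize p <= k.+1)%N.

Definition linear_on (R : ringType) (n : nat) (P : {mpoly R[n]} -> bool)
  (L : {mpoly R[n]} -> R) : Prop :=
  forall (a : R) (p q : {mpoly R[n]}), P p -> P q ->
    L (a *: p + q) = a * L p + L q.

(* Main.v *)
Require Import Defs.
From HB Require Import structures.
From mathcomp Require Import all_boot all_order all_algebra.
From mathcomp Require Import reals.
From mathcomp Require Import mpoly.
From mathcomp Require Import ring lra zify.
From Stdlib Require Import ClassicalEpsilon.
Import Order.TTheory GRing.Theory Num.Theory.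
Local Open Scope ring_scope.
Definition qf {T : eqType} {R : nzRingType} (s : seq T) (A : T -> T -> R) (v : T -> R) :=
  \sum_(i <- s) \sum_(j <- s) v i * v j * A i j.

Lemma qf_cons (T : eqType) (R : comNzRingType) (i0 : T) (s : seq T) (A : T -> T -> R) v :
  (forall i j, A i j = A j i) ->
  qf (i0 :: s) A v = v i0 * v i0 * A i0 i0
     + 2 * v i0 * (\sum_(j <- s) v j * A i0 j) + qf s A v.
Proof.
move=> Asym; rewrite /qf big_cons.
rewrite [X in X + _]big_cons.
under [X in _ + X = _]eq_bigr => i _ do rewrite big_cons.
rewrite big_split /=.
have -> : \sum_(i <- s) v i * v i0 * A i i0 = \sum_(j <- s) v i0 * (v j * A i0 j).
  by apply: eq_bigr => i _; rewrite Asym; ring.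
have -> : \sum_(j <- s) v i0 * v j * A i0 j = \sum_(j <- s) v i0 * (v j * A i0 j).
  by apply: eq_bigr => i _; ring.
rewrite -mulr_sumr; ring.
Qed.

Lemma sq_sum_bound (T : eqType) (R : realFieldType) (s : seq T) (a x : T -> R) (t : R) :
  (forall j, j \in s -> x j ^+ 2 <= t) ->
  (\sum_(j <- s) a j * x j) ^+ 2 <= (\sum_(j <- s) `|a j|) ^+ 2 * t.
Proof.
move=> hx.
have h1 : `|\sum_(j <- s) a j * x j| <= \sum_(j <- s) `|a j| * `|x j|.
  by apply: le_trans (ler_norm_sum _ _ _) _; apply: ler_sum => j _; rewrite normrM.
have h0 : 0 <= \sum_(j <- s) `|a j| * `|x j|.
  by apply: sumr_ge0 => j _; rewrite mulr_ge0.
apply: (@le_trans _ _ ((\sum_(j <- s) `|a j| * `|x j|) ^+ 2)).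
  rewrite -real_normK ?num_real //.
  by rewrite lerXn2r // ?nnegrE //.
rewrite !expr2 !mulr_suml big_seq_cond [X in _ <= X]big_seq_cond.
apply: ler_sum => i /andP [hi _]; rewrite !mulr_sumr !mulr_suml.
rewrite big_seq_cond [X in _ <= X]big_seq_cond.
apply: ler_sum => j /andP [hj _].
have hi' := hx i hi; have hj' := hx j hj.
have e1 : `|x i| ^+ 2 <= t by rewrite real_normK ?num_real.
have e2 : `|x j| ^+ 2 <= t by rewrite real_normK ?num_real.
have n1 := normr_ge0 (x i); have n2 := normr_ge0 (x j).
have n3 := normr_ge0 (a i); have n4 := normr_ge0 (a j).
have hxx : `|x i| * `|x j| <= t by nra.
have : 0 <= `|a i| * `|a j| by rewrite mulr_ge0.
nra.
Qed.

Lemma qf_ext (T : eqType) (R : nzRingType) (s : seq T) (A : T -> T -> R) v v' :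
  (forall j, j \in s -> v j = v' j) -> qf s A v = qf s A v'.
Proof.
move=> h; rewrite /qf; apply: eq_big_seq => i hi; apply: eq_big_seq => j hj.
by rewrite h // h.
Qed.

Arguments qf_ext {T R s A v v'}.

Lemma qf_zero (T : eqType) (R : nzRingType) (s : seq T) (A : T -> T -> R) v :
  ~~ has (fun i => v i != 0) s -> qf s A v = 0.
Proof.
move/hasPn => h; rewrite /qf big1_seq // => i /andP [_ hi].
have /negPn/eqP -> := h i hi; apply: big1 => j _; by rewrite !mul0r.
Qed.

Arguments qf_zero {T R s A v}.

Lemma qf_ge0 (T : eqType) (R : realFieldType) (s : seq T) (A : T -> T -> R) :
  (forall v : T -> R, has (fun i => v i != 0) s -> 0 < qf s A v) ->
  forall v, 0 <= qf s A v.
Proof.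
move=> PD v; case: (boolP (has (fun i => v i != 0) s)) => h.
  by apply: ltW; apply: PD.
by rewrite qf_zero.
Qed.

Arguments qf_ge0 {T R s A}.

Lemma pd_bound (T : eqType) (R : realFieldType) (s : seq T) (A : T -> T -> R) :
  uniq s -> (forall i j, A i j = A j i) ->
  (forall v : T -> R, has (fun i => v i != 0) s -> 0 < qf s A v) ->
  exists2 c, 0 < c & forall v i, i \in s -> c * v i ^+ 2 <= qf s A v.
Proof.
elim: s A => [|i0 s IH] A.
  by move=> _ _ _; exists 1 => //.
move=> /= /andP [ni0 us] Asym PD.
set w := A i0 i0.
have wpos : 0 < w.
  pose v := fun k : T => (k == i0)%:R : R.
  have := PD v; rewrite /= /v eqxx oner_neq0 /= qf_cons // qf_zero; last first.
    apply/hasPn => j hj /=; have -> : (j == i0) = false.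
      by apply/negbTE; apply: contraNneq ni0 => <-.
    by rewrite eqxx.
  rewrite big1_seq ?mulr0 ?mul1r ?addr0 //; last first.
    move=> j /andP [_ hj]; have -> : (j == i0) = false.
      by apply/negbTE; apply: contraNneq ni0 => <-.
    by rewrite mul0r.
  by move=> h; have := h isT; rewrite eqxx !mul1r.
have wn0 : w != 0 by rewrite gt_eqF.
pose B (v : T -> R) := \sum_(j <- s) v j * A i0 j.
pose A' := fun i j => A i j - A i0 i * A i0 j / w.
have A'sym : forall i j, A' i j = A' j i.
  by move=> i j; rewrite /A' Asym; congr (_ - _); ring.
have qfA' : forall v, qf s A' v = qf s A v - B v ^+ 2 / w.
  move=> v; rewrite /qf /A' expr2 /B mulr_suml mulr_suml -sumrB; apply: eq_bigr => i _.
  rewrite mulr_sumr mulr_suml -sumrB; apply: eq_bigr => j _; field.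
  exact: wn0.
have key : forall v, qf (i0 :: s) A v = w * (v i0 + B v / w) ^+ 2 + qf s A' v.
  move=> v; rewrite qf_cons // qfA' -/(B v) /w; field; exact: wn0.
have PD' : forall v : T -> R, has (fun i => v i != 0) s -> 0 < qf s A' v.
  move=> v hv.
  pose v' := fun k => if k == i0 then - B v / w else v k.
  have ev : forall j, j \in s -> v j = v' j.
    move=> j hj; rewrite /v'; have -> : (j == i0) = false.
      by apply/negbTE; apply: contraNneq ni0 => <-.
    by [].
  have eB : B v' = B v.
    by rewrite /B; apply: eq_big_seq => j hj; rewrite ev.
  have := PD v'; rewrite key eB /v' eqxx.
  have -> : - B v / w + B v / w = 0 by rewrite mulNr addNr.
  rewrite expr0n /= mulr0 add0r -(qf_ext ev) => -> //.
  apply/orP; right; case/hasP: hv => j hj vj; apply/hasP; exists j => //.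
  have -> : (j == i0) = false.
    by apply/negbTE; apply: contraNneq ni0 => <-.
  by [].
have [c' c'pos Hc'] := IH A' us A'sym PD'.
set S := \sum_(j <- s) `|A i0 j|.
set a := 2 * S ^+ 2 / (c' * w ^+ 2).
have apos : 0 <= a.
  rewrite /a; apply: divr_ge0; apply: mulr_ge0; rewrite ?sqr_ge0 //.
  exact: ltW.
have a1 : 0 < a + 1 by lra.
have cpos : 0 < Num.min c' (Num.min (w / 2) (1 / (a + 1))).
  by rewrite !lt_min c'pos !divr_gt0.
exists (Num.min c' (Num.min (w / 2) (1 / (a + 1)))) => //.
move=> v i hi.
have R'ge0 := qf_ge0 PD' v.
set R' := qf s A' v.
set c := Num.min _ _.
have c1 : c <= c' by rewrite ge_min lexx.
have c2 : c <= w / 2 by rewrite !ge_min lexx orbT.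
have c3 : c <= 1 / (a + 1) by rewrite !ge_min lexx !orbT.
rewrite key -/R'.
set z := v i0 + B v / w.
have z2 : 0 <= z ^+ 2 by rewrite sqr_ge0.
case/predU1P: hi => [->|hi]; last first.
  have := Hc' v i hi; rewrite -/R' => h.
  have : 0 <= v i ^+ 2 by rewrite sqr_ge0.
  have : 0 <= w * z ^+ 2 by rewrite mulr_ge0 // ltW.
  nra.
have hB : B v ^+ 2 <= S ^+ 2 * (R' / c').
  have -> : B v = \sum_(j <- s) A i0 j * v j.
    by apply: eq_bigr => j _; rewrite mulrC.
  apply: sq_sum_bound => j hj.
  rewrite ler_pdivlMr // mulrC; exact: Hc'.
have hv0 : v i0 ^+ 2 <= 2 * z ^+ 2 + a * R'.
  have -> : v i0 = z - B v / w by rewrite /z addrK.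
  have e : 2 * (B v / w) ^+ 2 <= a * R'.
    have c'n0 : c' != 0 by rewrite gt_eqF.
    have -> : 2 * (B v / w) ^+ 2 = (2 / w ^+ 2) * B v ^+ 2.
      by field; exact: wn0.
    have -> : a * R' = (2 / w ^+ 2) * (S ^+ 2 * (R' / c')).
      by rewrite /a; field; rewrite c'n0 wn0.
    apply: ler_wpM2l => //; apply: divr_ge0 => //; exact: sqr_ge0.
  have : 0 <= (z + B v / w) ^+ 2 by rewrite sqr_ge0.
  nra.
have ca : c * (a + 1) <= 1.
  by move: c3; rewrite ler_pdivlMr ?mul1r.
have cp : 0 < c by [].
have h1 : c * v i0 ^+ 2 <= c * (2 * z ^+ 2 + a * R') by rewrite ler_wpM2l // ltW.
have h2 : c * (2 * z ^+ 2) <= w * z ^+ 2.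
  have : 0 <= (w / 2 - c) * z ^+ 2 by rewrite mulr_ge0 // subr_ge0.
  lra.
have h3 : c * (a * R') <= R'.
  have : 0 <= (1 - c * (a + 1)) * R' by rewrite mulr_ge0 // subr_ge0.
  have : 0 <= c * R' by rewrite mulr_ge0 // ltW.
  lra.
lra.
Qed.

Definition psi (n : nat) (m : 'X_{1..n}) : nat := (\sum_(k < n) (m k) ^ 2)%N.
Arguments psi {n}.

Lemma psi_double (n : nat) (m : 'X_{1..n}) : psi (m + m)%MM = (4 * psi m)%N.
Proof.
rewrite /psi big_distrr /=; apply: eq_bigr => k _; rewrite mnmDE -!mulnn; nia.
Qed.

Lemma psi_lt (n : nat) (m1 m2 : 'X_{1..n}) : m1 != m2 ->
  ((psi (m1 + m2)%MM).+1 <= 2 * psi m1 + 2 * psi m2)%N.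
Proof.
move=> ne.
have [k hk] : exists k, m1 k != m2 k.
  apply/existsP; apply: contraR ne; rewrite negb_exists => /forallP h.
  by apply/eqP/mnmP => i; apply/eqP; have := h i; rewrite negbK.
rewrite /psi !big_distrr /= -big_split /= (bigD1 k) //= [X in (_ <= X)%N](bigD1 k) //=.
rewrite -addSn; apply: leq_add.
  rewrite mnmDE; move: hk; move: (m1 k) (m2 k) => x y hxy.
  have : x <> y by move/eqP: hxy.
  rewrite -!mulnn => hne; have : (x < y)%N \/ (y < x)%N by lia.
  case=> h.
    have [d ->] : exists d, y = (x + d.+1)%N by exists (y - x.+1)%N; lia.
    nia.
  have [d ->] : exists d, x = (y + d.+1)%N by exists (x - y.+1)%N; lia.
  nia.
apply: leq_sum => i _; rewrite mnmDE -!mulnn.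
move: (m1 i) (m2 i) => x y; case: (leqP x y) => h.
  have [d ->] : exists d, y = (x + d)%N by exists (y - x)%N; lia.
  nia.
have [d ->] : exists d, x = (y + d)%N by exists (x - y)%N; lia.
nia.
Qed.

Lemma psi_pos (n : nat) (m : 'X_{1..n}) : (0 < mdeg m)%N -> (0 < psi m)%N.
Proof.
rewrite mdegE /psi => h; apply: (leq_trans h); apply: leq_sum => i _; rewrite -mulnn; nia.
Qed.

Lemma sum_sub_seq (T : eqType) (R : nmodType) (r s : seq T) (f : T -> R) :
  uniq r -> uniq s -> {subset r <= s} ->
  (forall x, x \in s -> x \notin r -> f x = 0) ->
  \sum_(x <- s) f x = \sum_(x <- r) f x.
Proof.
move=> ur us sub hf.
rewrite (bigID (fun x => x \in r)) /= [X in _ + X]big1_seq ?addr0; last first.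
  by move=> x /andP [hx hs]; apply: hf.
rewrite -big_filter; apply: perm_big; apply: uniq_perm.
- by apply: filter_uniq.
- by [].
- move=> x; rewrite mem_filter; apply/andP/idP => [[] //|hx]; split => //.
  exact: sub.
Qed.

Lemma mem_bmnm (n b : nat) (m : 'X_{1..n}) :
  (m \in [seq val i | i <- index_enum 'X_{1..n < b}]) = (mdeg m < b)%N.
Proof.
apply/mapP/idP => [[i _ ->]|h]; first exact: bmdeg.
by exists (BMultinom h) => //; rewrite mem_index_enum.
Qed.

Lemma sum_bmnm_le (R : nmodType) (n b b' : nat) (f : 'X_{1..n} -> R) :
  (b <= b')%N -> (forall m, (b <= mdeg m)%N -> f m = 0) ->
  \sum_(j : 'X_{1..n < b'}) f j = \sum_(i : 'X_{1..n < b}) f i.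
Proof.
move=> hb hf.
have E : forall b0, \sum_(j : 'X_{1..n < b0}) f j
   = \sum_(m <- [seq val i | i <- index_enum 'X_{1..n < b0}]) f m.
  by move=> b0; rewrite big_map.
rewrite !E; apply: sum_sub_seq.
- by rewrite map_inj_uniq ?index_enum_uniq //; apply: val_inj.
- by rewrite map_inj_uniq ?index_enum_uniq //; apply: val_inj.
- by move=> m; rewrite !mem_bmnm => h; apply: leq_trans hb.
- by move=> m _; rewrite mem_bmnm -leqNgt; apply: hf.
Qed.

Definition Lf (R : nzRingType) (n : nat) (ell : 'X_{1..n} -> R) (p : {mpoly R[n]}) : R :=
  \sum_(m <- msupp p) p@_m * ell m.
Arguments Lf {R n}.

Lemma LfE (R : nzRingType) (n : nat) (ell : 'X_{1..n} -> R) (p : {mpoly R[n]}) k :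
  (msize p <= k)%N -> Lf ell p = \sum_(m : 'X_{1..n < k}) p@_m * ell m.
Proof.
move=> hk; rewrite /Lf.
have -> : \sum_(m : 'X_{1..n < k}) p@_m * ell m
   = \sum_(m <- [seq val i | i <- index_enum 'X_{1..n < k}]) p@_m * ell m.
  by rewrite big_map.
symmetry; apply: sum_sub_seq.
- exact: msupp_uniq.
- by rewrite map_inj_uniq ?index_enum_uniq //; apply: val_inj.
- move=> m hm; rewrite mem_bmnm; apply: leq_trans hk; exact: msize_mdeg_lt.
- by move=> m _ hm; rewrite memN_msupp_eq0 // mul0r.
Qed.
Arguments LfE {R n ell p k}.

Lemma Lf_lin (R : comNzRingType) (n : nat) (ell : 'X_{1..n} -> R) a (p q : {mpoly R[n]}) :
  Lf ell (a *: p + q) = a * Lf ell p + Lf ell q.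
Proof.
set k := maxn (msize p) (msize q).
have hp : (msize p <= k)%N by rewrite leq_maxl.
have hq : (msize q <= k)%N by rewrite leq_maxr.
have hpq : (msize (a *: p + q) <= k)%N.
  apply: leq_trans (msizeD_le _ _) _; rewrite geq_max hq andbT.
  exact: leq_trans (mmeasureZ_le _ _ _) hp.
rewrite !(LfE hp) !(LfE hq) !(LfE hpq) mulr_sumr -big_split /=.
by apply: eq_bigr => m _; rewrite mcoeffD mcoeffZ; ring.
Qed.
Arguments Lf_lin {R n}.

Lemma Lf_add (R : comNzRingType) (n : nat) (ell : 'X_{1..n} -> R) (p q : {mpoly R[n]}) :
  Lf ell (p + q) = Lf ell p + Lf ell q.
Proof. by rewrite -{1}[p]scale1r Lf_lin mul1r. Qed.
Arguments Lf_add {R n}.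

Lemma Lf_0 (R : comNzRingType) (n : nat) (ell : 'X_{1..n} -> R) : Lf ell 0 = 0.
Proof. by rewrite /Lf msupp0 big_nil. Qed.
Arguments Lf_0 {R n}.

Lemma Lf_scale (R : comNzRingType) (n : nat) (ell : 'X_{1..n} -> R) a (p : {mpoly R[n]}) :
  Lf ell (a *: p) = a * Lf ell p.
Proof. by rewrite -[a *: p]addr0 Lf_lin Lf_0 addr0. Qed.
Arguments Lf_scale {R n}.

Lemma Lf_X (R : comNzRingType) (n : nat) (ell : 'X_{1..n} -> R) m :
  Lf ell 'X_[m] = ell m.
Proof. by rewrite /Lf msuppX big_seq1 mcoeffX eqxx mul1r. Qed.
Arguments Lf_X {R n}.

Lemma Lf_sq (R : comNzRingType) (n : nat) (ell : 'X_{1..n} -> R) (p : {mpoly R[n]}) k :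
  (msize p <= k)%N ->
  Lf ell (p * p) = \sum_(i : 'X_{1..n < k}) \sum_(j : 'X_{1..n < k}) p@_i * p@_j * ell (i + j)%MM.
Proof.
move=> hk; rewrite (mpolywME hk hk).
rewrite (big_morph (Lf ell) (Lf_add ell) (Lf_0 ell)) pair_big /=.
by apply: eq_bigr => x _; rewrite Lf_scale Lf_X.
Qed.
Arguments Lf_sq {R n ell p k}.

Lemma L_expand (R : comNzRingType) (n k : nat) (L : {mpoly R[n]} -> R) :
  linear_on (deg_le k) L -> forall p, deg_le k p ->
  L p = \sum_(m : 'X_{1..n < k.+1}) p@_m * L 'X_[m].
Proof.
move=> lin p hp.
have L0 : L 0 = 0.
  have := lin 1 0 0; rewrite /deg_le msize0 => /(_ isT isT).
  rewrite scaler0 addr0 mul1r => h.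
  have : L 0 - L 0 = L 0 + L 0 - L 0 by rewrite -h.
  by rewrite subrr addrK.
rewrite {1}(mpolywE hp).
suff [] : deg_le k (\sum_(m : 'X_{1..n < k.+1}) p@_m *: 'X_[m]) /\
   L (\sum_(m : 'X_{1..n < k.+1}) p@_m *: 'X_[m]) = \sum_(m : 'X_{1..n < k.+1}) p@_m * L 'X_[m] by [].
apply: (big_ind2 (fun x y => deg_le k x /\ L x = y)).
- by rewrite /deg_le msize0.
- move=> x1 x2 y1 y2 [h1 e1] [h2 e2]; split; first rewrite /deg_le in h1 h2 *.
    apply: leq_trans (msizeD_le _ _) _; by rewrite geq_max h1 h2.
  by rewrite -[x1]scale1r lin // mul1r e1 e2.
- move=> m _; split.
    rewrite /deg_le; apply: leq_trans (mmeasureZ_le _ _ _) _.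
    by rewrite msizeX; apply: bmdeg.
  rewrite -[_ *: _]addr0 lin ?L0 ?addr0 //; last by rewrite /deg_le msize0.
  rewrite /deg_le msizeX; exact: bmdeg.
Qed.

Definition Qf (R : nzRingType) (n D : nat) (ell v : 'X_{1..n} -> R) : R :=
  \sum_(i : 'X_{1..n < D.+1}) \sum_(j : 'X_{1..n < D.+1}) v i * v j * ell (i + j)%MM.
Arguments Qf {R n}.

Definition PDf (R : realFieldType) (n D : nat) (ell : 'X_{1..n} -> R) : Prop :=
  forall v : 'X_{1..n} -> R, (exists i : 'X_{1..n < D.+1}, v i != 0) -> 0 < Qf D ell v.
Arguments PDf {R n}.

Lemma pdf_bound (R : realFieldType) (n D : nat) (ell : 'X_{1..n} -> R) :
  PDf D ell -> exists2 c, 0 < c &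
    forall (v : 'X_{1..n} -> R) (i : 'X_{1..n < D.+1}), c * v i ^+ 2 <= Qf D ell v.
Proof.
move=> H.
have [|||c cpos Hc] := @pd_bound _ R (index_enum 'X_{1..n < D.+1})
   (fun i j => ell (val i + val j)%MM).
- exact: index_enum_uniq.
- by move=> i j; rewrite addmC.
- move=> v' hv'.
  pose v := fun m : 'X_{1..n} => if (insub m : option 'X_{1..n < D.+1}) is Some i then v' i else 0.
  have ev : forall i : 'X_{1..n < D.+1}, v (val i) = v' i by move=> i; rewrite /v valK.
  have <- : Qf D ell v = qf (index_enum 'X_{1..n < D.+1}) (fun i j => ell (val i + val j)%MM) v'.
    by rewrite /Qf /qf; apply: eq_bigr => i _; apply: eq_bigr => j _; rewrite !ev.
  apply: H; case/hasP: hv' => i _ hi; exists i; by rewrite ev.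
exists c => // v i.
exact: (Hc (fun i => v (val i)) i (mem_index_enum i)).
Qed.
Arguments pdf_bound {R n D ell}.

Lemma amgm_aux (R : realFieldType) (c k M a h Qa G : R) :
  0 < c -> 0 <= k -> 0 <= M -> c * a ^+ 2 <= Qa -> k * h ^+ 2 <= G ->
  4 * M ^+ 2 <= c * k -> 4 * M * (`|a| * `|h|) <= Qa + G.
Proof.
move=> cp kp Mp ha hh hM.
have ea : `|a| ^+ 2 = a ^+ 2 by rewrite real_normK ?num_real.
have eh : `|h| ^+ 2 = h ^+ 2 by rewrite real_normK ?num_real.
move: ha hh; rewrite -ea -eh.
have := normr_ge0 a; have := normr_ge0 h.
move: `|a| `|h| => x y y0 x0 ha hh.
have e1 : c * (Qa + G) >= c * (c * x ^+ 2) + c * (k * y ^+ 2).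
  by rewrite mulrDr lerD // ler_wpM2l // ltW.
have e2 : c * (k * y ^+ 2) >= 4 * M ^+ 2 * y ^+ 2.
  by rewrite mulrA ler_wpM2r // sqr_ge0.
have e3 : 0 <= (c * x - 2 * M * y) ^+ 2 by rewrite sqr_ge0.
have e4 : c * (4 * M * (x * y)) <= c * (Qa + G) by nra.
by move: e4; rewrite ler_pM2l.
Qed.

Lemma eqle (R : realFieldType) (x y : R) : x = y -> x <= y.
Proof. by move=> ->. Qed.

Lemma sum_delta (R : nzRingType) (I : finType) (i : I) (K : R) :
  \sum_(j : I) (i == j)%:R * K = K.
Proof.
rewrite (bigD1 i) //= eqxx mul1r big1 ?addr0 // => j hj.
by rewrite eq_sym (negbTE hj) mul0r.
Qed.

Lemma G_bound (R : realFieldType) (n D : nat) (h l' : 'X_{1..n} -> R) (W : R) :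
  1 <= W -> #|{: 'X_{1..n < D.+2}}|%:R * 2 <= W ->
  (forall m, mdeg m != D.+1 -> h m = 0) ->
  (forall m, mdeg m = (D.+1 + D.+1)%N -> l' m = W ^+ psi m) ->
  0 <= Qf D.+1 l' h /\ forall j, W ^+ 2 / 2 * h j ^+ 2 <= Qf D.+1 l' h.
Proof.
move=> W1 WN hz hl.
set N : R := #|{: 'X_{1..n < D.+2}}|%:R.
have W0 : 0 < W by apply: lt_le_trans W1; exact: ltr01.
have Wn0 : W != 0 by rewrite gt_eqF.
pose u (i : 'X_{1..n}) := h i * W ^+ (2 * psi i).
have nn : forall x : R, `|x| * `|x| = x ^+ 2.
  by move=> x; rewrite -expr2 real_normK ?num_real.
have pt : forall i j : 'X_{1..n < D.+2},
    (i == j)%:R * ((1 + W^-1) * u i ^+ 2) - `|u i| * `|u j| / W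
    <= h i * h j * l' (i + j)%MM.
  move=> i j.
  case: (eqVneq (h i) 0) => hi.
    have ui : u i = 0 by rewrite /u hi mul0r.
    by rewrite ui hi expr0n /= !mulr0 normr0 !mul0r subr0.
  case: (eqVneq (h j) 0) => hj.
    case: (eqVneq i j) => [e|_]; first by rewrite e hj eqxx in hi.
    have uj : u j = 0 by rewrite /u hj mul0r.
    by rewrite uj hj normr0 !mulr0 !mul0r subr0.
  have di : mdeg i = D.+1.
    by case: (eqVneq (mdeg i) D.+1) => // ndi; rewrite (hz _ ndi) eqxx in hi.
  have dj : mdeg j = D.+1.
    by case: (eqVneq (mdeg j) D.+1) => // ndj; rewrite (hz _ ndj) eqxx in hj.
  rewrite hl; last by rewrite mdegD di dj.
  case: (eqVneq i j) => [<-|ne].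
    rewrite /= mulr1n mul1r nn psi_double /u exprMn -exprM.
    have -> : (2 * psi i * 2 = 4 * psi i)%N by rewrite mulnC mulnA.
    by apply: eqle; field.
  rewrite /= mulr0n mul0r sub0r; apply: lerNnormlW.
  have ne' : (i : 'X_{1..n}) != j by [].
  rewrite (normrM (h i * h j)) (normrM (h i)) /u /= (normrM (h i)) (normrM (h j)).
  rewrite !(ger0_norm (exprn_ge0 _ (ltW W0))).
  have hW : W ^+ psi (i + j)%MM <= W ^+ (2 * psi i) * W ^+ (2 * psi j) / W.
    rewrite ler_pdivlMr // -exprSr -exprD; apply: ler_weXn2l => //.
    exact: psi_lt.
  have hh : 0 <= `|h i| * `|h j| by rewrite mulr_ge0.
  have := ler_wpM2l hh hW.
  move: (W ^+ (2 * psi i)) (W ^+ (2 * psi j)) => A B.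
  by move=> e; apply: (le_trans e) => {e}; apply: eqle; field.
set S := \sum_(i : 'X_{1..n < D.+2}) u i ^+ 2.
have S0 : 0 <= S by apply: sumr_ge0 => i _; exact: sqr_ge0.
have T_bound : \sum_(i : 'X_{1..n < D.+2}) \sum_(j : 'X_{1..n < D.+2}) `|u i| * `|u j| <= N * S.
  apply: (@le_trans _ _ (\sum_(i : 'X_{1..n < D.+2}) \sum_(j : 'X_{1..n < D.+2})
            (u i ^+ 2 + u j ^+ 2) / 2)).
    apply: ler_sum => i _; apply: ler_sum => j _.
    rewrite -(nn (u i)) -(nn (u j)).
    have := normr_ge0 (u i); have := normr_ge0 (u j).
    move: `|u i| `|u j| => x y _ _.
    have : 0 <= (x - y) ^+ 2 by exact: sqr_ge0.
    lra.
  apply: eqle.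
  have inner : forall i : 'X_{1..n < D.+2},
      \sum_(j : 'X_{1..n < D.+2}) (u i ^+ 2 + u j ^+ 2) / 2 = (u i ^+ 2 * N + S) / 2.
    move=> i; rewrite -mulr_suml big_split /= sumr_const -/S /N mulr_natr //.
  rewrite (eq_bigr _ (fun i _ => inner i)) -mulr_suml big_split /= -mulr_suml.
  rewrite sumr_const -/S.
  have -> : S *+ #|{: 'X_{1..n < D.+2}}| = S * N by rewrite /N mulr_natr.
  by field.
have G1 : S / 2 <= Qf D.+1 l' h.
  apply: (@le_trans _ _ (\sum_(i : 'X_{1..n < D.+2}) \sum_(j : 'X_{1..n < D.+2})
     ((i == j)%:R * ((1 + W^-1) * u i ^+ 2) - `|u i| * `|u j| / W))); last first.
    by apply: ler_sum => i _; apply: ler_sum => j _; exact: pt.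
  under eq_bigr => i _ do rewrite sumrB sum_delta -mulr_suml.
  rewrite sumrB -mulr_suml -mulr_sumr -/S.
  have h1 : (\sum_(i : 'X_{1..n < D.+2}) \sum_(j : 'X_{1..n < D.+2}) `|u i| * `|u j|) / W
      <= N * S / W by rewrite ler_pM2r ?invr_gt0 // T_bound.
  have h2 : N * S / W <= S / 2.
    rewrite ler_pdivrMr //; move: WN; rewrite -/N => WN; nra.
  have h3 : 0 <= W^-1 * S by rewrite mulr_ge0 // invr_ge0 ltW.
  rewrite mulrDl mul1r; lra.
split; first by apply: le_trans G1; rewrite divr_ge0.
move=> j; apply: le_trans G1.
have key : W ^+ 2 * h j ^+ 2 <= S.
  case: (eqVneq (h j) 0) => [->|hj]; first by rewrite expr0n /= mulr0.
  have dj : mdeg j = D.+1.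
    by case: (eqVneq (mdeg j) D.+1) => // ndj; rewrite (hz _ ndj) eqxx in hj.
  have dj' : (mdeg j < D.+2)%N by rewrite dj.
  pose j' : 'X_{1..n < D.+2} := BMultinom dj'.
  apply: (@le_trans _ _ (u j' ^+ 2)); last first.
    rewrite /S (bigD1 j') //= lerDl; apply: sumr_ge0 => i _; exact: sqr_ge0.
  rewrite /u /= exprMn mulrC ler_wpM2l ?sqr_ge0 //.
  have pj : (0 < psi j)%N by apply: psi_pos; rewrite dj.
  rewrite -exprM; apply: ler_weXn2l => //.
  by move: pj; clear; lia.
nra.
Qed.

Definition extf (R : nzRingType) (n D : nat) (ell : 'X_{1..n} -> R) (W : R) : 'X_{1..n} -> R :=
  fun g => if (mdeg g <= (2 * D).+1)%N then ell g else W ^+ psi g.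
Arguments extf {R n}.

Lemma arith1 (R : realFieldType) (c0 X K S : R) :
  c0 <= X * K -> 4 * (X + 1) * K = S -> 0 <= K -> 2 * c0 <= S / 2.
Proof. move=> h1 h2 h3; lra. Qed.
Arguments arith1 {R c0 X K S}.

Lemma arith2 (R : realFieldType) (x y z : R) :
  2 * `|z| <= (x + y) / 2 -> 0 < x + y -> 0 < x + 2 * z + y.
Proof. move=> h1 h2; have := lerNnormlW (lexx `|z|); lra. Qed.
Arguments arith2 {R x y z}.

Lemma step (R : realFieldType) (n D : nat) (ell : 'X_{1..n} -> R) :
  PDf D ell -> exists W, PDf D.+1 (extf D ell W).
Proof.
move=> H.
have [c cpos Hc] := pdf_bound H.
set X := \sum_(i : 'X_{1..n < D.+2}) \sum_(j : 'X_{1..n < D.+2}) `|ell (i + j)%MM|.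
have X0 : 0 <= X by apply: sumr_ge0 => i _; apply: sumr_ge0 => j _; exact: normr_ge0.
set N : R := #|{: 'X_{1..n < D.+2}}|%:R.
have N0 : 0 <= N by apply: ler0n.
have K0 : 0 <= 8 * (X + 1) ^+ 2 / c.
  apply: divr_ge0; last exact: ltW.
  apply: mulr_ge0; [exact: ler0n | exact: sqr_ge0].
set W := N * 2 + 8 * (X + 1) ^+ 2 / c + 1.
have W1 : 1 <= W by rewrite /W; lra.
have WN : N * 2 <= W by rewrite /W; lra.
have Wc : 8 * (X + 1) ^+ 2 <= c * W.
  have : 8 * (X + 1) ^+ 2 / c <= W by rewrite /W; lra.
  move=> hh; have := ler_wpM2l (ltW cpos) hh.
  have -> : c * (8 * (X + 1) ^+ 2 / c) = 8 * (X + 1) ^+ 2.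
    by field; rewrite gt_eqF.
  by [].
exists W => v [j0 hj0].
pose a := fun m : 'X_{1..n} => if (mdeg m <= D)%N then v m else 0.
pose h := fun m : 'X_{1..n} => if mdeg m == D.+1 then v m else 0.
set l' := extf D ell W.
set Qa := Qf D ell a.
set G := Qf D.+1 l' h.
have [G0 HG] : 0 <= G /\ forall j, W ^+ 2 / 2 * h j ^+ 2 <= G.
  apply: G_bound => //.
    by move=> m hm; rewrite /h (negbTE hm).
  move=> m hm; rewrite /l' /extf hm.
  have -> : (D.+1 + D.+1 <= (2 * D).+1)%N = false by apply/negbTE; rewrite -ltnNge; lia.
  by [].
have Qa0 : 0 <= Qa.
  by apply: le_trans _ (Hc a bm0); rewrite mulr_ge0 ?sqr_ge0 // ltW.
have Hca : forall i : 'X_{1..n}, c * a i ^+ 2 <= Qa.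
  move=> i; case: (leqP (mdeg i) D) => hi.
    have hi' : (mdeg i < D.+1)%N by [].
    exact: (Hc a (BMultinom hi')).
  have -> : a i = 0 by rewrite /a leqNgt hi.
  by rewrite expr2 !mulr0 Qa0.
set C := \sum_(i : 'X_{1..n < D.+2}) \sum_(j : 'X_{1..n < D.+2}) a i * h j * l' (i + j)%MM.
have dec : Qf D.+1 l' v = Qa + 2 * C + G.
  have ev : forall i : 'X_{1..n < D.+2}, v i = a i + h i.
    move=> i; rewrite /a /h; have := bmdeg i; case: (leqP (mdeg i) D) => hi hi2.
      by case: eqP => e; [lia | rewrite addr0].
    have -> : mdeg i == D.+1 by apply/eqP; lia.
    by rewrite add0r.
  have e1 : Qf D.+1 l' v = \sum_(i : 'X_{1..n < D.+2}) \sum_(j : 'X_{1..n < D.+2})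
     (a i * a j * l' (i + j)%MM + a i * h j * l' (i + j)%MM
      + h i * a j * l' (i + j)%MM + h i * h j * l' (i + j)%MM).
    by rewrite /Qf; apply: eq_bigr => i _; apply: eq_bigr => j _; rewrite !ev; ring.
  rewrite e1.
  under eq_bigr => i _ do rewrite !big_split.
  rewrite !big_split /=.
  have T3 : \sum_(i : 'X_{1..n < D.+2}) \sum_(j : 'X_{1..n < D.+2}) h i * a j * l' (i + j)%MM = C.
    rewrite exchange_big; apply: eq_bigr => i _; apply: eq_bigr => j _.
    by rewrite [(j + i)%MM]addmC [h j * a i]mulrC.
  have T1 : \sum_(i : 'X_{1..n < D.+2}) \sum_(j : 'X_{1..n < D.+2}) a i * a j * l' (i + j)%MM = Qa.
    rewrite /Qa /Qf.
    transitivity (\sum_(i : 'X_{1..n < D.+1}) \sum_(j : 'X_{1..n < D.+2}) a i * a j * l' (i + j)%MM).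
      apply: (@sum_bmnm_le _ n D.+1 D.+2
        (fun i => \sum_(j : 'X_{1..n < D.+2}) a i * a j * l' (i + j)%MM)) => // m hm.
      have -> : a m = 0 by rewrite /a leqNgt hm.
      by rewrite big1 // => j _; rewrite !mul0r.
    apply: eq_bigr => i _.
    transitivity (\sum_(j : 'X_{1..n < D.+1}) a i * a j * l' (i + j)%MM).
      apply: (@sum_bmnm_le _ n D.+1 D.+2 (fun j => a i * a j * l' (i + j)%MM)) => // m hm.
      have -> : a m = 0 by rewrite /a leqNgt hm.
      by rewrite mulr0 mul0r.
    apply: eq_bigr => j _; congr (_ * _); rewrite /l' /extf mdegD.
    have := bmdeg i; have := bmdeg j; case: ifP => // hf.
    by move/negbT: hf; rewrite -ltnNge; lia.
  rewrite T1 T3; transitivity (Qa + C + C + G); first by []. ring.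
have Cb : 2 * `|C| <= (Qa + G) / 2.
  have pt : forall i j : 'X_{1..n < D.+2},
      `|a i * h j * l' (i + j)%MM| <= `|a i| * `|h j| * `|ell (i + j)%MM|.
    move=> i j; case: (leqP (mdeg i) D) => hi; last first.
      have -> : a i = 0 by rewrite /a leqNgt hi.
      by rewrite !mul0r normr0 !mulr_ge0.
    case: (eqVneq (mdeg j) D.+1) => hj; last first.
      have -> : h j = 0 by rewrite /h (negbTE hj).
      by rewrite mulr0 mul0r normr0 !mulr_ge0.
    rewrite /l' /extf mdegD hj.
    have -> : (mdeg i + D.+1 <= (2 * D).+1)%N by lia.
    by rewrite !normrM.
  have hC : `|C| <= \sum_(i : 'X_{1..n < D.+2}) \sum_(j : 'X_{1..n < D.+2})
                      `|a i| * `|h j| * `|ell (i + j)%MM|.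
    apply: le_trans (ler_norm_sum _ _ _) _; apply: ler_sum => i _.
    apply: le_trans (ler_norm_sum _ _ _) _; apply: ler_sum => j _; exact: pt.
  have X1 : 0 < X + 1 by apply: ltr_wpDl X0 ltr01.
  have X4 : 0 < 4 * (X + 1) by rewrite mulr_gt0 // ltr0n.
  have amgm : forall i j : 'X_{1..n < D.+2}, 4 * (X + 1) * (`|a i| * `|h j|) <= Qa + G.
    move=> i j; apply: (@amgm_aux _ c (W ^+ 2 / 2) (X + 1) (a i) (h j) Qa G cpos _ (ltW X1) (Hca i) (HG j)).
      by rewrite divr_ge0 // sqr_ge0.
    have WW : W <= W ^+ 2 by apply: ler_eXnr.
    have h8 : 8 * (X + 1) ^+ 2 <= c * W ^+ 2.
      by apply: le_trans Wc _; rewrite ler_wpM2l // ltW.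
    rewrite mulrA ler_pdivlMr //; apply: le_trans h8; apply: eqle; ring.
  set K := (Qa + G) / (4 * (X + 1)).
  have hsum : \sum_(i : 'X_{1..n < D.+2}) \sum_(j : 'X_{1..n < D.+2})
                `|a i| * `|h j| * `|ell (i + j)%MM| <= X * K.
    rewrite /X mulr_suml; apply: ler_sum => i _; rewrite mulr_suml; apply: ler_sum => j _.
    rewrite mulrC ler_wpM2l //; rewrite /K ler_pdivlMr // mulrC.
    exact: amgm.
  have KK0 : 0 <= K by rewrite /K divr_ge0 ?addr_ge0 // ltW.
  have eK : 4 * (X + 1) * K = Qa + G by rewrite /K mulrC divfK // gt_eqF.
  exact: (arith1 (le_trans hC hsum) eK KK0).
have pos : 0 < Qa + G.
  case: (leqP (mdeg j0) D) => hj.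
    have e : a j0 = v j0 by rewrite /a hj.
    have := Hca j0; rewrite e => h1.
    have : 0 < v j0 ^+ 2 by rewrite lt_def sqrf_eq0 hj0 sqr_ge0.
    move=> vp; apply: ltr_wpDr G0 _ ; apply: lt_le_trans h1; exact: mulr_gt0.
  have hj' : mdeg j0 = D.+1 by have := bmdeg j0; lia.
  have e : h j0 = v j0 by rewrite /h hj' eqxx.
  have := HG j0; rewrite e => h1.
  have : 0 < v j0 ^+ 2 by rewrite lt_def sqrf_eq0 hj0 sqr_ge0.
  have W2 : 0 < W ^+ 2 / 2.
    by rewrite divr_gt0 // (lt_le_trans ltr01) // exprn_ege1.
  move=> vp; apply: ltr_wpDl Qa0 _ ; apply: lt_le_trans h1; exact: mulr_gt0.
rewrite dec; exact: (arith2 Cb pos).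
Qed.
Arguments step {R n D ell}.

Definition Wch (R : realFieldType) (n D : nat) (ell : 'X_{1..n} -> R) : R :=
  epsilon (inhabits 0) (fun W => PDf D.+1 (extf D ell W)).
Arguments Wch {R n}.

Fixpoint Fseq (R : realFieldType) (n d : nat) (ell0 : 'X_{1..n} -> R) (j : nat)
  : 'X_{1..n} -> R :=
  match j with
  | 0 => ell0
  | j'.+1 => extf (d + j') (Fseq R n d ell0 j') (Wch (d + j') (Fseq R n d ell0 j'))
  end.
Arguments Fseq {R n}.

Lemma Fseq_PD (R : realFieldType) (n d : nat) (ell0 : 'X_{1..n} -> R) :
  PDf d ell0 -> forall j, PDf (d + j) (Fseq d ell0 j).
Proof.
move=> H; elim=> [|j IH]; first by rewrite addn0.
rewrite addnS /=.
exact: (epsilon_spec (inhabits 0)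
   (fun W => PDf (d + j).+1 (extf (d + j) (Fseq d ell0 j) W)) (step IH)).
Qed.
Arguments Fseq_PD {R n d ell0}.

Lemma Fseq_coh (R : realFieldType) (n d : nat) (ell0 : 'X_{1..n} -> R) j k g :
  (mdeg g <= (2 * (d + j)).+1)%N -> Fseq d ell0 (j + k) g = Fseq d ell0 j g.
Proof.
move=> hg; elim: k => [|k IH]; first by rewrite addn0.
rewrite addnS /= /extf.
have -> : (mdeg g <= (2 * (d + (j + k))).+1)%N by lia.
exact: IH.
Qed.
Arguments Fseq_coh {R n d ell0}.

Definition linf (R : realFieldType) (n d : nat) (ell0 : 'X_{1..n} -> R) (g : 'X_{1..n}) : R :=
  Fseq d ell0 (mdeg g) g.
Arguments linf {R n}.

Lemma linf_eq (R : realFieldType) (n d : nat) (ell0 : 'X_{1..n} -> R) j g :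
  (mdeg g <= (2 * (d + j)).+1)%N -> linf d ell0 g = Fseq d ell0 j g.
Proof.
move=> hg; rewrite /linf; case: (leqP j (mdeg g)) => h.
  by rewrite -(subnKC h) Fseq_coh.
rewrite -(subnKC (ltnW h)) Fseq_coh //; lia.
Qed.
Arguments linf_eq {R n d ell0}.

Lemma msize_sumX (R : nzRingType) (n b : nat) (v : 'X_{1..n} -> R) :
  (msize (\sum_(m : 'X_{1..n < b}) v m *: 'X_[m] : {mpoly R[n]}) <= b)%N.
Proof.
elim/big_ind: _ => //.
- by rewrite msize0.
- move=> x y hx hy; apply: leq_trans (msizeD_le _ _) _; by rewrite geq_max hx hy.
- move=> m _; apply: leq_trans (mmeasureZ_le _ _ _) _; rewrite msizeX; exact: bmdeg.
Qed.

Theorem lemma3p4 (R : realType) (n d : nat) (L : {mpoly R[n]} -> R) :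
  linear_on (deg_le (2 * d)) L ->
  (forall p : {mpoly R[n]}, deg_le d p -> p != 0 -> 0 < L (p ^+ 2)) ->
  exists Lt : {mpoly R[n]} -> R,
    [/\ linear_on (fun _ => true) Lt,
        (forall p : {mpoly R[n]}, deg_le (2 * d) p -> Lt p = L p) &
        (forall p : {mpoly R[n]}, p != 0 -> 0 < Lt (p ^+ 2))].
Proof.
move=> lin pos.
pose ell0 := fun m : 'X_{1..n} => L 'X_[m].
have agree0 : forall q, deg_le (2 * d) q -> Lf ell0 q = L q.
  by move=> q hq; rewrite (LfE hq) (@L_expand _ _ _ _ lin _ hq).
have PD0 : PDf d ell0.
  move=> v [i hi].
  pose p := \sum_(m : 'X_{1..n < d.+1}) v m *: 'X_[m] : {mpoly R[n]}.
  have hp : deg_le d p by rewrite /deg_le msize_sumX.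
  have pc : forall m : 'X_{1..n < d.+1}, p@_m = v m.
    by move=> m; rewrite /p mcoeff_mpoly // bmdeg.
  have p0 : p != 0.
    apply/eqP => e; have := pc i; rewrite e mcoeff0 => e'.
    by rewrite -e' eqxx in hi.
  have hpp : deg_le (2 * d) (p * p).
    rewrite /deg_le (mpolywME hp hp); elim/big_ind: _ => //.
    - by rewrite msize0.
    - move=> x y hx hy; apply: leq_trans (msizeD_le _ _) _; by rewrite geq_max hx hy.
    - move=> m _; apply: leq_trans (mmeasureZ_le _ _ _) _; rewrite msizeX mdegD.
      by rewrite ltnS mul2n -addnn; apply: leq_add; rewrite -ltnS; exact: bmdeg.
  have := pos p hp p0; rewrite expr2 -(agree0 _ hpp) (Lf_sq hp).
  suff -> : \sum_(i0 : 'X_{1..n < d.+1}) \sum_(j : 'X_{1..n < d.+1}) p@_i0 * p@_j * ell0 (i0 + j)%MM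
     = Qf d ell0 v by [].
  by apply: eq_bigr => i0 _; apply: eq_bigr => j _; rewrite !pc.
exists (Lf (linf d ell0)); split.
- by move=> a p q _ _; exact: Lf_lin.
- move=> p hp; rewrite -agree0 // (LfE hp) (LfE hp); apply: eq_bigr => m _.
  congr (_ * _); rewrite (@linf_eq _ _ _ _ 0 m) //.
  by have := bmdeg m; lia.
move=> p p0.
set D := maxn d (msize p).
have hD : (msize p <= D.+1)%N by rewrite /D; apply: leqW; apply: leq_maxr.
have hdD : (d <= D)%N by apply: leq_maxl.
have PDD := Fseq_PD PD0 (D - d).
rewrite subnKC // in PDD.
rewrite expr2 (Lf_sq hD).
have -> : \sum_(i : 'X_{1..n < D.+1}) \sum_(j : 'X_{1..n < D.+1})
             p@_i * p@_j * linf d ell0 (i + j)%MM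
        = Qf D (Fseq d ell0 (D - d)) (fun m => p@_m).
  apply: eq_bigr => i _; apply: eq_bigr => j _; congr (_ * _).
  apply: linf_eq; rewrite mdegD; have := bmdeg i; have := bmdeg j; lia.
apply: PDD.
have hl : (mdeg (mlead p) < D.+1)%N.
  by rewrite -(mlead_deg p0) in hD.
exists (BMultinom hl) => /=.
by rewrite mleadc_eq0.
Qed.
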